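(* Let $\mathcal{X}$ be a compact design space and, for $i=1,\dots,\nu$, let $\eta_i(x,\theta_i)$ be regression functions with parameters in compact sets $\Theta_i\subset\mathbb{R}^{d_i}$ such that (A1) each $\eta_i(\cdot,\theta_i)$ is continuously differentiable with respect to $\theta_i$, and (A2) for every design $\xi$ with $T_{\mathrm{P}}(\xi)>0$ and every pair $(i,j)$ with $p_{i,j}\neq0$, the infimum $\inf_{\theta_{i,j}\in\Theta_j}\int_{\mathcal{X}}[\eta_i(x,\overline{\theta}_i)-\eta_j(x,\theta_{i,j})]^2\xi(dx)$ is attained at a unique point $\widehat{\theta}_{i,j}(\xi)$ in the interior of $\Theta_j$. Here $p_{i,j}\ge0$ are weights, $\overline{\theta}_i\in\Theta_i$ fixed, and $T_{\mathrm{P}}(\xi)=\sum_{i,j}p_{i,j}\inf_{\theta_{i,j}\in\Theta_j}\int_{\mathcal{X}}[\eta_i(x,\overline{\theta}_i)-\eta_j(x,\theta_{i,j})]^2\xi(dx)$. Consider the algorithm: start with a design $\xi_0$ with $T_{\mathrm{P}}(\xi_0)>0$; given $\xi_s$ with support $\mathcal{S}_{[s]}$, (1) set $\mathcal{S}_{[s+1]}=\mathcal{S}_{[s]}\cup\mathcal{E}_{[s]}$ where $\mathcal{E}_{[s]}$ is the set of all local maxima of $x\mapsto\Psi(x,\xi_s)$ on $\mathcal{X}$; (2) choose weights $\omega_{[s+1]}$ maximizing $\omega\mapsto T_{\mathrm{P}}(\{\mathcal{S}_{[s+1]},\omega\})$ over probability weight vectors on $\mathcal{S}_{[s+1]}$,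 discard zero-weight points, and let $\xi_{s+1}$ be the resulting design. Then at the end of each iteration, the function $x\mapsto\Psi(x,\xi_{s+1})$ takes one and the same value at all support points of $\xi_{s+1}$.
   Context: A design is a probability measure on $\mathcal{X}$ with finite support; $\{\mathcal{S},\omega\}$ denotes the design on the finite set $\mathcal{S}$ with weight vector $\omega$. Under (A1)–(A2), for a design $\xi$ with $T_{\mathrm{P}}(\xi)>0$, $$\Psi(x,\xi)=\sum_{i,j=1}^{\nu}p_{i,j}\big[\eta_i(x,\overline{\theta}_i)-\eta_j(x,\widehat{\theta}_{i,j}(\xi))\big]^2.$$ *)

(* Defs.v *)
From HB Require Import structures.
From mathcomp Require Import all_boot all_order all_algebra.
From mathcomp Require Import all_classical all_reals all_analysis.
Import Order.TTheory GRing.Theory Num.Theory.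
Import numFieldNormedType.Exports.
Local Open Scope classical_set_scope.
Local Open Scope ring_scope.

(* A design {S, w} is given by a duplicate-free list S of points of X and a
   weight function w (only its values on S matter), nonnegative on S, summing
   to 1 over S. Integration against the design is the weighted sum over S. *)

Definition is_design {R : realType} {k : nat} (X : set 'rV[R]_k)
  (S : seq 'rV[R]_k) (w : 'rV[R]_k -> R) : Prop :=
  [/\ uniq S, (forall x, x \in S -> X x), (forall x, x \in S -> 0 <= w x)
    & \sum_(x <- S) w x = 1].

Definition is_design_supp {R : realType} {k : nat} (X : set 'rV[R]_k)
  (S : seq 'rV[R]_k) (w : 'rV[R]_k -> R) : Prop :=
  is_design X S w /\ (forall x, x \in S -> 0 < w x).

Definition sqdist {R : realType} {k nu : nat} {d : 'I_nu -> nat}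
  (eta : forall i : 'I_nu, 'rV[R]_k -> 'rV[R]_(d i) -> R)
  (thetabar : forall i : 'I_nu, 'rV[R]_(d i))
  (i j : 'I_nu) (S : seq 'rV[R]_k) (w : 'rV[R]_k -> R) (th : 'rV[R]_(d j)) : R :=
  \sum_(x <- S) w x * (eta i x (thetabar i) - eta j x th) ^+ 2.

Definition infdist {R : realType} {k nu : nat} {d : 'I_nu -> nat}
  (eta : forall i : 'I_nu, 'rV[R]_k -> 'rV[R]_(d i) -> R)
  (thetabar : forall i : 'I_nu, 'rV[R]_(d i))
  (Theta : forall i : 'I_nu, set 'rV[R]_(d i))
  (i j : 'I_nu) (S : seq 'rV[R]_k) (w : 'rV[R]_k -> R) : R :=
  inf [set sqdist eta thetabar i j S w th | th in Theta j].

Definition TP {R : realType} {k nu : nat} {d : 'I_nu -> nat}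
  (eta : forall i : 'I_nu, 'rV[R]_k -> 'rV[R]_(d i) -> R)
  (thetabar : forall i : 'I_nu, 'rV[R]_(d i))
  (Theta : forall i : 'I_nu, set 'rV[R]_(d i))
  (p : 'I_nu -> 'I_nu -> R) (S : seq 'rV[R]_k) (w : 'rV[R]_k -> R) : R :=
  \sum_(i < nu) \sum_(j < nu) p i j * infdist eta thetabar Theta i j S w.

Definition thetahat {R : realType} {k nu : nat} {d : 'I_nu -> nat}
  (eta : forall i : 'I_nu, 'rV[R]_k -> 'rV[R]_(d i) -> R)
  (thetabar : forall i : 'I_nu, 'rV[R]_(d i))
  (Theta : forall i : 'I_nu, set 'rV[R]_(d i))
  (i j : 'I_nu) (S : seq 'rV[R]_k) (w : 'rV[R]_k -> R) : 'rV[R]_(d j) :=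
  xget 0 [set th | Theta j th /\
                   sqdist eta thetabar i j S w th = infdist eta thetabar Theta i j S w].

Definition Psi {R : realType} {k nu : nat} {d : 'I_nu -> nat}
  (eta : forall i : 'I_nu, 'rV[R]_k -> 'rV[R]_(d i) -> R)
  (thetabar : forall i : 'I_nu, 'rV[R]_(d i))
  (Theta : forall i : 'I_nu, set 'rV[R]_(d i))
  (p : 'I_nu -> 'I_nu -> R) (x : 'rV[R]_k) (S : seq 'rV[R]_k) (w : 'rV[R]_k -> R) : R :=
  \sum_(i < nu) \sum_(j < nu)
     p i j * (eta i x (thetabar i) - eta j x (thetahat eta thetabar Theta i j S w)) ^+ 2.

Definition locmax_on {R : realType} {k : nat} (X : set 'rV[R]_k)
  (f : 'rV[R]_k -> R) (x : 'rV[R]_k) : Prop :=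
  X x /\ \forall y \near x, X y -> f y <= f x.

Definition assumption_A1 {R : realType} {k nu : nat} {d : 'I_nu -> nat}
  (X : set 'rV[R]_k)
  (eta : forall i : 'I_nu, 'rV[R]_k -> 'rV[R]_(d i) -> R)
  (Theta : forall i : 'I_nu, set 'rV[R]_(d i)) : Prop :=
  forall (i : 'I_nu) (x : 'rV[R]_k), X x ->
    exists U : set 'rV[R]_(d i),
      [/\ open U, Theta i `<=` U,
          (forall th, U th -> differentiable (eta i x) th)
        & forall (v : 'rV[R]_(d i)) th, U th ->
            {for th, continuous (fun t => 'D_v (eta i x) t)}].

Definition assumption_A2 {R : realType} {k nu : nat} {d : 'I_nu -> nat}
  (X : set 'rV[R]_k)
  (eta : forall i : 'I_nu, 'rV[R]_k -> 'rV[R]_(d i) -> R)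
  (thetabar : forall i : 'I_nu, 'rV[R]_(d i))
  (Theta : forall i : 'I_nu, set 'rV[R]_(d i))
  (p : 'I_nu -> 'I_nu -> R) : Prop :=
  forall (S : seq 'rV[R]_k) (w : 'rV[R]_k -> R),
    is_design X S w -> 0 < TP eta thetabar Theta p S w ->
    forall i j : 'I_nu, p i j != 0 ->
      exists th : 'rV[R]_(d j),
        [/\ Theta j th,
            sqdist eta thetabar i j S w th = infdist eta thetabar Theta i j S w,
            (forall th', Theta j th' ->
               sqdist eta thetabar i j S w th' = infdist eta thetabar Theta i j S w ->
               th' = th)
          & (Theta j)° th].

(* Main.v *)
Require Import Defs.
From HB Require Import structures.
From mathcomp Require Import all_boot all_order all_algebra.
From mathcomp Require Import all_classical all_reals all_analysis.
From mathcomp Require Import ring lra.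
Import Order.TTheory GRing.Theory Num.Theory.
Import numFieldNormedType.Exports.
Local Open Scope classical_set_scope.
Local Open Scope ring_scope.

Lemma delta_sum {R : realType} {T : eqType} {S : seq T} {x : T} (F : T -> R) :
  uniq S -> x \in S -> \sum_(z <- S) (z == x)%:R * F z = F x.
Proof.
move=> uS xS; rewrite (bigD1_seq x) //= eqxx mul1r big1 ?addr0 //.
by move=> z /negbTE ->; rewrite mul0r.
Qed.

Lemma pert_sum (R : realType) (T : eqType) (S : seq T) (x y : T) (w F : T -> R) t :
  uniq S -> x \in S -> y \in S ->
  \sum_(z <- S) (w z + t * ((z == x)%:R - (z == y)%:R)) * F z =
  \sum_(z <- S) w z * F z + t * (F x - F y).
Proof.
move=> uS xS yS; rewrite -(delta_sum F uS xS) -(delta_sum F uS yS).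
rewrite mulrBr !mulr_sumr -sumrB -big_split /=; apply: eq_bigr => z _; ring.
Qed.

Lemma sub_sum (R : realType) (T : eqType) (S1 S2 : seq T) (w1 w2 F : T -> R) :
  uniq S1 -> uniq S2 -> {subset S1 <= S2} ->
  (forall z, z \in S1 -> w2 z = w1 z) ->
  (forall z, z \in S2 -> z \notin S1 -> w2 z = 0) ->
  \sum_(z <- S2) w2 z * F z = \sum_(z <- S1) w1 z * F z.
Proof.
move=> u1 u2 sub e1 e0.
rewrite (bigID (fun z => z \in S1)) /= [X in _ + X]big1_seq ?addr0; last first.
  by move=> z /andP[zn zS]; rewrite e0 ?mul0r.
rewrite -big_filter.
have pe : perm_eq [seq z <- S2 | z \in S1] S1.
  apply: uniq_perm; first exact: filter_uniq.
    exact: u1.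
  by move=> z; rewrite mem_filter; apply/idP/idP => [/andP[]//|zS]; rewrite zS sub.
rewrite (perm_big _ pe) /=; apply: eq_big_seq => z zS; rewrite e1 //.
Qed.

Lemma combine (R : realType) (I : eqType) (s : seq I) (Q : I -> R -> Prop) :
  (forall i, exists2 t0, 0 < t0 & forall t, 0 <= t -> t <= t0 -> Q i t) ->
  exists2 t0, 0 < t0 & forall i, i \in s -> forall t, 0 <= t -> t <= t0 -> Q i t.
Proof.
move=> H; elim: s => [|a s [t1 t1p IH]]; first by exists 1.
have [t2 t2p H2] := H a.
exists (Num.min t1 t2); first by rewrite lt_min t1p t2p.
move=> i; rewrite inE => /orP[/eqP->|iS] t t0 tle; move: tle; rewrite le_min => /andP[h1 h2].
  exact: H2.
exact: IH.
Qed.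

Lemma cont_sum (R : realType) (T : topologicalType) (I : eqType) (s : seq I)
   (F : I -> T -> R) x :
  (forall i, i \in s -> {for x, continuous (F i)}) ->
  {for x, continuous (fun t => \sum_(i <- s) F i t)}.
Proof.
elim: s => [|a s IH] H.
  have -> : (fun t => \sum_(i <- [::]) F i t) = (fun=> 0) by apply: funext => t; rewrite big_nil.
  exact: cst_continuous.
have -> : (fun t => \sum_(i <- a :: s) F i t) = F a + (fun t => \sum_(i <- s) F i t).
  by apply: funext => t; rewrite big_cons.
apply: continuousD; first by apply: H; rewrite inE eqxx.
by apply: IH => i iS; apply: H; rewrite inE iS orbT.
Qed.
Lemma key (R : realType) n (A : set 'rV[R]_n) (a b : 'rV[R]_n -> R) th0 :
  compact A -> A th0 -> {in A, continuous a} -> {in A, continuous b} ->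
  (forall th, A th -> a th0 <= a th) ->
  (forall th, A th -> a th = a th0 -> th = th0) ->
  forall e, 0 < e -> exists2 t0, 0 < t0 & forall t, 0 <= t -> t <= t0 ->
    forall th, A th -> a th0 + t * (b th0 - e) <= a th + t * b th.
Proof.
move=> cA A0 ca cb amin auniq e e0.
pose G th := (a th - a th0) + Num.max 0 (b th - (b th0 - e)).
have A0' : A !=set0 by exists th0.
have cG : {within A, continuous G}.
  apply: continuous_in_subspaceT => th thA.
  apply: (@continuousD _ _ _ (fun th => a th - a th0)
            (fun th => Num.max 0 (b th - (b th0 - e)))).
    apply: (@continuousB _ _ _ a (fun=> a th0)).
    exact: (ca th thA). exact: cst_continuous.
  apply: (@continuous_max _ _ (fun=> 0) (fun th => b th - (b th0 - e))).
    exact: cst_continuous.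
  by apply: (@continuousB _ _ _ b (fun=> b th0 - e)); [exact: (cb th thA)|exact: cst_continuous].
have [c cA' Gc] := EVT_min_rV A0' cA cG.
have [c' cA'' bc] := EVT_min_rV A0' cA (continuous_in_subspaceT cb).
rewrite inE in cA'; rewrite inE in cA''.
have Gpos : 0 < G c.
  rewrite /G; have [->|ne] := eqVneq c th0.
    by rewrite subrr add0r lt_max opprB addrC subrK e0 orbT.
  have : a th0 < a c.
    by rewrite lt_neqAle amin // andbT; apply/eqP => h; move/eqP: ne; apply; exact: auniq.
  rewrite -subr_gt0 => h; apply: (lt_le_trans h); rewrite lerDl le_max lexx //.
pose M := `|b th0| + `|b c'| + 1.
have Mpos : 0 < M by rewrite /M ltr_pwDr // addr_ge0.
exists (G c / M); first by rewrite divr_gt0.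
move=> t t0 tle th thA.
have bth : b c' <= b th by apply: bc; rewrite inE.
have [lt|ge] := ltP (b th0 - e) (b th).
  apply: lerD; first exact: amin.
  by apply: ler_wpM2l => //; apply: ltW.
have Gth : G th = a th - a th0.
  by rewrite /G max_l ?addr0 // subr_le0.
have hG : G c <= a th - a th0 by rewrite -Gth; apply: Gc; rewrite inE.
have tM : t * M <= G c by rewrite -ler_pdivlMr.
have h1 : b th0 - e - b th <= M.
  rewrite /M; have := ler_norm (b th0); have := ler_normr (b c').
  have := normr_ge0 (b c'); move=> *.
  have : - b c' <= `|b c'| by rewrite -normrN ler_norm.
  lra.
have : t * (b th0 - e - b th) <= t * M by apply: ler_wpM2l.
nra.
Qed.
Lemma sqdist_cont (R : realType) (k nu : nat) (d : 'I_nu -> nat)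
  (X : set 'rV[R]_k)
  (eta : forall i : 'I_nu, 'rV[R]_k -> 'rV[R]_(d i) -> R)
  (thetabar : forall i : 'I_nu, 'rV[R]_(d i))
  (Theta : forall i : 'I_nu, set 'rV[R]_(d i))
  (hA1 : assumption_A1 X eta Theta) S w (SX : forall z, z \in S -> X z) i j th :
  Theta j th -> {for th, continuous (sqdist eta thetabar i j S w)}.
Proof.
move=> thT; rewrite /sqdist; apply: cont_sum => z zS.
have [U [oU TU dU _]] := hA1 j z (SX z zS).
have ce : {for th, continuous (eta j z)}.
  by apply: differentiable_continuous; apply: dU; apply: TU.
have cd : {for th, continuous (fun t => eta i z (thetabar i) - eta j z t)}.
  by apply: (@continuousB _ _ _ (fun=> eta i z (thetabar i)) (eta j z)); [exact: cst_continuous|exact: ce].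
have -> : (fun t => w z * (eta i z (thetabar i) - eta j z t) ^+ 2) =
  (fun=> w z) \* ((fun t => eta i z (thetabar i) - eta j z t) \* (fun t => eta i z (thetabar i) - eta j z t)).
  by apply: funext => t; rewrite /= expr2.
apply: continuousM; first exact: cst_continuous.
exact: continuousM.
Qed.

Lemma sqdist_ge0 (R : realType) (k nu : nat) (d : 'I_nu -> nat)
  (X : set 'rV[R]_k)
  (eta : forall i : 'I_nu, 'rV[R]_k -> 'rV[R]_(d i) -> R)
  (thetabar : forall i : 'I_nu, 'rV[R]_(d i)) S w i j th :
  is_design X S w -> 0 <= sqdist eta thetabar i j S w th.
Proof.
case=> _ _ w0 _; rewrite /sqdist big_seq; apply: sumr_ge0 => z zS.
by apply: mulr_ge0; [exact: w0|exact: sqr_ge0].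
Qed.

Lemma eq_sqdist_all (R : realType) (k nu : nat) (d : 'I_nu -> nat)
  (eta : forall i : 'I_nu, 'rV[R]_k -> 'rV[R]_(d i) -> R)
  (thetabar : forall i : 'I_nu, 'rV[R]_(d i))
  (Theta : forall i : 'I_nu, set 'rV[R]_(d i))
  (p : 'I_nu -> 'I_nu -> R) S1 w1 S2 w2 :
  (forall i j th, sqdist eta thetabar i j S1 w1 th = sqdist eta thetabar i j S2 w2 th) ->
  (forall x, Psi eta thetabar Theta p x S1 w1 = Psi eta thetabar Theta p x S2 w2) /\
  TP eta thetabar Theta p S1 w1 = TP eta thetabar Theta p S2 w2.
Proof.
move=> E.
have Ef : forall i j, sqdist eta thetabar i j S1 w1 = sqdist eta thetabar i j S2 w2.
  by move=> i j; apply: funext => th; apply: E.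
have Ei : forall i j, infdist eta thetabar Theta i j S1 w1 = infdist eta thetabar Theta i j S2 w2.
  by move=> i j; rewrite /infdist Ef.
have Et : forall i j, thetahat eta thetabar Theta i j S1 w1 = thetahat eta thetabar Theta i j S2 w2.
  by move=> i j; rewrite /thetahat Ei Ef.
split.
  move=> x; rewrite /Psi; apply: eq_bigr => i _; apply: eq_bigr => j _; by rewrite Et.
by rewrite /TP; apply: eq_bigr => i _; apply: eq_bigr => j _; rewrite Ei.
Qed.

Theorem lemma3p2 (R : realType) (k nu : nat) (d : 'I_nu -> nat)
  (X : set 'rV[R]_k)
  (eta : forall i : 'I_nu, 'rV[R]_k -> 'rV[R]_(d i) -> R)
  (thetabar : forall i : 'I_nu, 'rV[R]_(d i))
  (Theta : forall i : 'I_nu, set 'rV[R]_(d i))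
  (p : 'I_nu -> 'I_nu -> R)
  (hX : compact X)
  (hTheta : forall i, compact (Theta i))
  (hthetabar : forall i, Theta i (thetabar i))
  (hp : forall i j, 0 <= p i j)
  (hA1 : assumption_A1 X eta Theta)
  (hA2 : assumption_A2 X eta thetabar Theta p)
  (Sq : nat -> seq 'rV[R]_k) (wq : nat -> 'rV[R]_k -> R)
  (h0 : is_design_supp X (Sq 0%N) (wq 0%N))
  (h0pos : 0 < TP eta thetabar Theta p (Sq 0%N) (wq 0%N))
  (hstep : forall s : nat,
     exists (S' : seq 'rV[R]_k) (w' : 'rV[R]_k -> R),
       [/\ uniq S',
           (forall x, x \in S' <->
              (x \in Sq s \/
               locmax_on X (fun y => Psi eta thetabar Theta p y (Sq s) (wq s)) x)),
           is_design X S' w',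
           (forall w, is_design X S' w ->
              TP eta thetabar Theta p S' w <= TP eta thetabar Theta p S' w')
         & Sq s.+1 = [seq x <- S' | w' x != 0] /\
           forall x, x \in Sq s.+1 -> wq s.+1 x = w' x]) :
  forall s : nat, exists c : R,
    forall x, x \in Sq s.+1 -> Psi eta thetabar Theta p x (Sq s.+1) (wq s.+1) = c.
Proof.
have stepeq : forall s S' w', uniq S' -> Sq s.+1 = [seq x <- S' | w' x != 0] ->
   (forall x, x \in Sq s.+1 -> wq s.+1 x = w' x) ->
   forall (F : 'rV[R]_k -> R),
     \sum_(z <- S') w' z * F z = \sum_(z <- Sq s.+1) wq s.+1 z * F z.
  move=> s S' w' uS' Sd wd F; apply: sub_sum => //.
  - by rewrite Sd; exact: filter_uniq.
  - by move=> z; rewrite Sd mem_filter => /andP[].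
  - by move=> z zS; rewrite wd.
  - by move=> z zS; rewrite Sd mem_filter zS andbT negbK => /eqP.
have sum1 : forall (S1 S2 : seq 'rV[R]_k) (w1 w2 : 'rV[R]_k -> R),
    \sum_(z <- S1) w1 z * 1 = \sum_(z <- S2) w2 z * 1 ->
    \sum_(z <- S1) w1 z = \sum_(z <- S2) w2 z.
  move=> S1 S2 w1 w2 h.
  transitivity (\sum_(z <- S1) w1 z * 1); first by apply: eq_bigr => z _; rewrite mulr1.
  rewrite h; apply: eq_bigr => z _; by rewrite mulr1.
have inv : forall s, is_design X (Sq s) (wq s) /\ 0 < TP eta thetabar Theta p (Sq s) (wq s).
  elim=> [|s [[uS XS wS sS] TPpos]]; first by case: h0 => hd _; split.
  have [S' [w' [uS' memS' dS' opt [Sd wd]]]] := hstep s.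
  have dS'c := dS'; case: dS'c => [_ XS' wS' sS'].
  have E := stepeq s S' w' uS' Sd wd.
  have ES : forall i j th, sqdist eta thetabar i j (Sq s.+1) (wq s.+1) th =
                           sqdist eta thetabar i j S' w' th.
    by move=> i j th; rewrite /sqdist E.
  have [_ TPe] := eq_sqdist_all _ _ _ _ _ _ Theta p _ _ _ _ ES.
  split.
    split.
    - by rewrite Sd; exact: filter_uniq.
    - by move=> z; rewrite Sd mem_filter => /andP[_ /XS'].
    - by move=> z zS; rewrite wd //; move: zS; rewrite Sd mem_filter => /andP[_ /wS'].
    - by rewrite -sS'; apply: sum1; rewrite E.
  rewrite TPe.
  pose w0 z := if z \in Sq s then wq s z else 0.
  have sub : {subset Sq s <= S'} by move=> z zS; apply/memS'; left.
  have E0 : forall F : 'rV[R]_k -> R,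
      \sum_(z <- S') w0 z * F z = \sum_(z <- Sq s) wq s z * F z.
    move=> F; apply: sub_sum => //.
    - by move=> z zS; rewrite /w0 zS.
    - by move=> z _ zn; rewrite /w0 (negbTE zn).
  have d0 : is_design X S' w0.
    split => //.
    - by move=> z _; rewrite /w0; case: ifP => // zS; exact: wS.
    - by rewrite -sS; apply: sum1; rewrite E0.
  have ES0 : forall i j th, sqdist eta thetabar i j S' w0 th =
                            sqdist eta thetabar i j (Sq s) (wq s) th.
    by move=> i j th; rewrite /sqdist E0.
  have [_ TP0] := eq_sqdist_all _ _ _ _ _ _ Theta p _ _ _ _ ES0.
  apply: (lt_le_trans TPpos); rewrite -TP0; exact: opt.
move=> s.
have [S' [w' [uS' memS' dS' opt [Sd wd]]]] := hstep s.
have dS'c := dS'; case: dS'c => [_ XS' wS' sS'].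
have E := stepeq s S' w' uS' Sd wd.
have ES : forall i j th, sqdist eta thetabar i j (Sq s.+1) (wq s.+1) th =
                         sqdist eta thetabar i j S' w' th.
  by move=> i j th; rewrite /sqdist E.
have [PsiE TPe] := eq_sqdist_all _ _ _ _ _ _ Theta p _ _ _ _ ES.
have TPpos : 0 < TP eta thetabar Theta p S' w' by rewrite -TPe; case: (inv s.+1).
have claim : forall x y, x \in S' -> y \in S' -> w' y != 0 ->
    Psi eta thetabar Theta p x S' w' <= Psi eta thetabar Theta p y S' w'.
  move=> x y xS yS wy.
  rewrite leNgt; apply/negP => lt.
  set D := Psi eta thetabar Theta p x S' w' - Psi eta thetabar Theta p y S' w'.
  have D0 : 0 < D by rewrite /D subr_gt0.
  have xy : x != y by apply/eqP => exy; move: lt; rewrite exy ltxx.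
  have wypos : 0 < w' y by rewrite lt_neqAle eq_sym wy wS'.
  pose P := \sum_(i < nu) \sum_(j < nu) p i j.
  have P0 : 0 <= P by apply: sumr_ge0 => i _; apply: sumr_ge0 => j _; exact: hp.
  pose e := D / (P + 1).
  have P1 : 0 < P + 1 by rewrite ltr_pwDr.
  have e0 : 0 < e by rewrite /e divr_gt0.
  have eP : e * P < D.
    rewrite /e mulrAC ltr_pdivrMr //; nra.
  pose g (i j : 'I_nu) (z : 'rV[R]_k) (th : 'rV[R]_(d j)) :=
    (eta i z (thetabar i) - eta j z th) ^+ 2.
  pose wt (t : R) (z : 'rV[R]_k) := w' z + t * ((z == x)%:R - (z == y)%:R).
  pose bst i j := g i j x (thetahat eta thetabar Theta i j S' w') -
                  g i j y (thetahat eta thetabar Theta i j S' w').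
  have sqwt : forall t i j th, sqdist eta thetabar i j S' (wt t) th =
      sqdist eta thetabar i j S' w' th + t * (g i j x th - g i j y th).
    by move=> t i j th; rewrite /sqdist /wt pert_sum.
  have Qall : forall ij : 'I_nu * 'I_nu, exists2 t0, 0 < t0 & forall t, 0 <= t -> t <= t0 ->
      p ij.1 ij.2 != 0 ->
      infdist eta thetabar Theta ij.1 ij.2 S' w' + t * (bst ij.1 ij.2 - e) <=
      infdist eta thetabar Theta ij.1 ij.2 S' (wt t).
    case=> i j /=.
    have [pij0|pne] := eqVneq (p i j) 0.
      by exists 1 => // t _ _; rewrite pij0 eqxx.
    have [th0 [T0 eq0 uq _]] := hA2 S' w' dS' TPpos i j pne.
    have the : thetahat eta thetabar Theta i j S' w' = th0.
      rewrite /thetahat; apply: xget_unique => [|th' [h1 h2]]; first by split.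
      exact: uq.
    have lbd : forall th, Theta j th ->
        infdist eta thetabar Theta i j S' w' <= sqdist eta thetabar i j S' w' th.
      move=> th Th; rewrite /infdist; apply: ge_inf; last by exists th.
      by exists 0 => v [th1 _ <-]; exact: sqdist_ge0 dS'.
    have cont1 : forall (w : 'rV[R]_k -> R) th, Theta j th ->
        {for th, continuous (sqdist eta thetabar i j S' w)}.
      by move=> w th Th; apply: (@sqdist_cont _ _ _ _ X eta thetabar Theta hA1 S' w) => // z zS; exact: XS'.
    have cb : {in Theta j, continuous (fun th => g i j x th - g i j y th)}.
      move=> th; rewrite inE => Th.
      have -> : (fun th => g i j x th - g i j y th) =
        sqdist eta thetabar i j S' (wt 1) - sqdist eta thetabar i j S' w'.
        by apply: funext => th1; rewrite !fctE sqwt mul1r addrC addKr.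
      by apply: continuousB; apply: cont1.
    have [t0 t0p H] := @key R (d j) (Theta j) (sqdist eta thetabar i j S' w')
      (fun th => g i j x th - g i j y th) th0 (hTheta j) T0
      (fun th Th => cont1 w' th (set_mem Th)) cb
      (fun th Th => eq_ind _ (fun v => v <= _) (lbd th Th) _ (esym eq0))
      (fun th Th h => uq th Th (etrans h eq0)) e e0.
    exists t0 => // t tp tle _.
    rewrite /bst the -eq0 /infdist; apply: lb_le_inf.
      by exists (sqdist eta thetabar i j S' (wt t) th0), th0.
    by move=> v [th Th <-]; rewrite sqwt; apply: H.
  have [t0 t0p Ht] := @combine R _ (enum [set: ('I_nu * 'I_nu)%type]) _ Qall.
  pose t := Num.min t0 (w' y).
  have tp : 0 < t by rewrite lt_min t0p wypos.
  have tle0 : t <= t0 by rewrite ge_min lexx.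
  have tley : t <= w' y by rewrite ge_min lexx orbT.
  have dt : is_design X S' (wt t).
    split => //.
    - move=> z zS; rewrite /wt; have [->|zy] := eqVneq z y.
        have yx : (y == x) = false by rewrite eq_sym (negbTE xy).
        by rewrite yx sub0r mulrN1 subr_ge0.
      rewrite subr0; apply: addr_ge0; first exact: wS'.
      by apply: mulr_ge0; [exact: ltW|exact: ler0n].
    - rewrite -sS'; apply: sum1; rewrite /wt pert_sum // subrr mulr0 addr0.
      by [].
  have up := opt _ dt.
  have low : TP eta thetabar Theta p S' w' + t * D - t * e * P <=
             TP eta thetabar Theta p S' (wt t).
    have DE : D = \sum_(i < nu) \sum_(j < nu) p i j * bst i j.
      rewrite /D /Psi -sumrB; apply: eq_bigr => i _; rewrite -sumrB.
      by apply: eq_bigr => j _; rewrite /bst /g mulrBr.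
    have -> : TP eta thetabar Theta p S' w' + t * D - t * e * P =
      \sum_(i < nu) \sum_(j < nu) p i j *
        (infdist eta thetabar Theta i j S' w' + t * (bst i j - e)).
      rewrite DE /TP /P !mulr_sumr -big_split -sumrB /=; apply: eq_bigr => i _.
      rewrite !mulr_sumr -big_split -sumrB /=; apply: eq_bigr => j _; ring.
    rewrite /TP; apply: ler_sum => i _; apply: ler_sum => j _.
    have [->|pne] := eqVneq (p i j) 0; first by rewrite !mul0r.
    apply: ler_wpM2l; first exact: hp.
    apply: (Ht (i, j)) => //; [by rewrite mem_enum in_setT|exact: ltW].
  have : 0 < t * (D - e * P) by apply: mulr_gt0 => //; rewrite subr_gt0.
  move: up low; set T1 := TP _ _ _ _ _ (wt t); set T0 := TP _ _ _ _ _ w'.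
  move=> up low h; have : T0 + t * D - t * e * P <= T0 by apply: le_trans low up.
  nra.
case Sq1 : (Sq s.+1) => [|z0 r]; first by exists 0 => x; rewrite in_nil.
have memS : forall x, x \in Sq s.+1 -> x \in S' /\ w' x != 0.
  by move=> x; rewrite Sd mem_filter => /andP[].
have z0in : z0 \in Sq s.+1 by rewrite Sq1 inE eqxx.
exists (Psi eta thetabar Theta p z0 (Sq s.+1) (wq s.+1)) => x.
rewrite -Sq1 => xin; rewrite !PsiE.
have [xS wx] := memS x xin; have [zS wz] := memS z0 z0in.
by apply/le_anti/andP; split; apply: claim.
Qed.
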